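(* Consider a finite MDP with states $\mathcal{X}=\{1,\dots,n\}$, finite action set $\mathcal{A}$, costs $c(i,a)$, discount factor $\vartheta\in(0,1)$, a policy $\pi:\mathcal{X}\to\mathcal{A}$, uncertainty sets $\mathcal{P}^a_i$, proxy uncertainty sets $\widehat{\mathcal{P}^a_i}$, exploration matrix $P^{\widehat{\pi}}$ with stationary distribution $\xi$ and feature matrix $\Phi\in\mathbb{R}^{n\times d}$ as in the context. Suppose there is $\alpha\in(0,1)$ with $\vartheta p_j\le\alpha P^{\widehat{\pi}}_{ij}$ for all $i,j\in\mathcal{X}$, $a\in\mathcal{A}$, $p\in\mathcal{P}^a_i$; let $\beta^a_i:=\max_{y\in\widehat{U^a_i}}\min_{x\in U^a_i}\|y-x\|_\xi/\xi_{\min}$, $\beta:=\max_{i}\beta^{\pi(i)}_i$, and assume $\alpha^2+\vartheta^2\beta^2<\tfrac12$. Let $\widetilde{v}_\pi\in\mathbb{R}^n$ satisfy $\Pi\widehat{T}_\pi\widetilde{v}_\pi=\widetilde{v}_\pi$ and let $v_\pi\in\mathbb{R}^n$ satisfy $T_\pi v_\pi=v_\pi$. Then \[ \|\widetilde{v}_\pi-v_\pi\|_\xi\le\frac{\vartheta\beta\|v_\pi\|_\xi+\|\Pi v_\pi-v_\pi\|_\xi}{1-\sqrt{2(\alpha^2+\vartheta^2\beta^2)}} . \] In particular, if $\beta^{\pi(i)}_i=0$ for all $i$ (the proxy confidence regions equal the true ones), then $\|\widetilde{v}_\pi-v_\pi\|_\xi\le\dfrac{\|\Pi v_\pi-v_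\pi\|_\xi}{1-\alpha}$.
   Context: For each $i\in\mathcal{X},a\in\mathcal{A}$: $p^a_i\in\Delta_n$ is the nominal transition probability vector; $U^a_i\subseteq\mathbb{R}^n$ is a nonempty compact confidence region with $\mathcal{P}^a_i:=\{p^a_i+x\mid x\in U^a_i\}\subseteq\Delta_n$; $\widehat{U^a_i}\supseteq U^a_i$ is a nonempty compact proxy region and $\widehat{\mathcal{P}^a_i}:=\{p^a_i+y\mid y\in\widehat{U^a_i}\}$. $\sigma_S(v):=\sup_{s\in S}s^\top v$. Robust Bellman operator: $(T_\pi v)(i):=c(i,\pi(i))+\vartheta\,\sigma_{\mathcal{P}^{\pi(i)}_i}(v)$; proxy robust Bellman operator: $(\widehat{T}_\pi v)(i):=c(i,\pi(i))+\vartheta\,\sigma_{\widehat{\mathcal{P}^{\pi(i)}_i}}(v)$. $P^{\widehat{\pi}}$ is the $n\times n$ transition matrix of the exploration policy, $\xi$ its steady-state distribution with all entries positive, $\xi_{\min}=\min_i\xi_i$, $\|x\|_\xi:=(\sum_i\xi_ix_i^2)^{1/2}$, and $\Pi$ is the $\|\cdot\|_\xi$-orthogonal projection onto $S:=\{\Phi\theta\mid\theta\in\mathbb{R}^d\}$. *)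

(* Defs.v *)
From HB Require Import structures.
From mathcomp Require Import all_boot all_order all_algebra.
From mathcomp Require Import all_classical all_reals all_analysis.
Set Implicit Arguments. Unset Strict Implicit. Unset Printing Implicit Defensive.
Import Order.TTheory GRing.Theory Num.Theory.
Import numFieldNormedType.Exports.
Local Open Scope classical_set_scope.
Local Open Scope ring_scope.

Section Defs.
Variables (R : realType) (n : nat).

(* vectors of R^n are column vectors 'cV[R]_n ; entry i is x i 0 *)

Definition dotv (s v : 'cV[R]_n) : R := \sum_(i < n) s i 0 * v i 0.

Definition supp_fun (S : set 'cV[R]_n) (v : 'cV[R]_n) : R :=
  sup [set dotv s v | s in S].

Definition simplex : set 'cV[R]_n :=
  [set q | (forall j, 0 <= q j 0) /\ \sum_(j < n) q j 0 = 1].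

Definition xinner (xi x y : 'cV[R]_n) : R := \sum_(i < n) xi i 0 * x i 0 * y i 0.
Definition xnorm (xi x : 'cV[R]_n) : R := Num.sqrt (\sum_(i < n) xi i 0 * x i 0 ^+ 2).

(* xi_min = min_i xi_i.  Since xi is a probability vector, every entry is
   <= 1, so using 1 as the neutral element of the min gives exactly min_i xi_i. *)
Definition xi_min (xi : 'cV[R]_n) : R := \big[Num.min/1]_(i < n) xi i 0.

Definition is_xi_proj (d : nat) (Phi : 'M[R]_(n, d)) (xi x y : 'cV[R]_n) : Prop :=
  (exists th : 'cV[R]_d, y = Phi *m th) /\
  (forall th : 'cV[R]_d, xinner xi (x - y) (Phi *m th) = 0).

Definition stochastic (P : 'M[R]_n) : Prop :=
  (forall i j, 0 <= P i j) /\ (forall i, \sum_(j < n) P i j = 1).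

Definition stationary (P : 'M[R]_n) (xi : 'cV[R]_n) : Prop :=
  simplex xi /\ (forall j, \sum_(i < n) xi i 0 * P i j = xi j 0).

Variable (A : finType).

Definition shift_set (p : 'cV[R]_n) (U : set 'cV[R]_n) : set 'cV[R]_n :=
  [set p + x | x in U].

Definition bellman (c : 'I_n -> A -> R) (theta : R) (pi : 'I_n -> A)
  (p : 'I_n -> A -> 'cV[R]_n) (U : 'I_n -> A -> set 'cV[R]_n) (v : 'cV[R]_n)
  : 'cV[R]_n :=
  \col_i (c i (pi i) + theta * supp_fun (shift_set (p i (pi i)) (U i (pi i))) v).

(* beta_i^a = max_{y in Uhat} min_{x in U} ||y - x||_xi / xi_min
   (max/min attained by compactness, written as sup/inf) *)
Definition beta_ia (xi : 'cV[R]_n) (U Uhat : set 'cV[R]_n) : R :=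
  sup [set inf [set xnorm xi (y - x) | x in U] | y in Uhat] / xi_min xi.

(* beta = max_i beta_i^{pi(i)}  (each beta_i^a >= 0) *)
Definition beta_max (xi : 'cV[R]_n) (pi : 'I_n -> A)
  (U Uhat : 'I_n -> A -> set 'cV[R]_n) : R :=
  \big[Num.max/0]_(i < n) beta_ia xi (U i (pi i)) (Uhat i (pi i)).

End Defs.
Arguments simplex {R n}.

(* Main.v *)
Require Import Defs.
From HB Require Import structures.
From mathcomp Require Import all_boot all_order all_algebra.
From mathcomp Require Import all_classical all_reals all_analysis.
From mathcomp Require Import ring lra.
Import Order.TTheory GRing.Theory Num.Theory.
Import numFieldNormedType.Exports.
Local Open Scope classical_set_scope.
Local Open Scope ring_scope.
Set Implicit Arguments. Unset Strict Implicit.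

Lemma cs_w (R : realType) (n : nat) (c a b : 'I_n -> R) :
  (forall j, 0 <= c j) ->
  (\sum_j c j * a j * b j) ^+ 2 <=
  (\sum_j c j * a j ^+ 2) * (\sum_j c j * b j ^+ 2).
Proof.
move=> c0.
set A := \sum_j c j * a j ^+ 2; set B := \sum_j c j * b j ^+ 2;
set C := \sum_j c j * a j * b j.
have B0 : 0 <= B by apply: sumr_ge0 => j _; rewrite mulr_ge0 // sqr_ge0.
have A0 : 0 <= A by apply: sumr_ge0 => j _; rewrite mulr_ge0 // sqr_ge0.
have key : 0 <= B * (A * B - C ^+ 2).
  have -> : B * (A * B - C ^+ 2) = \sum_j c j * (a j * B - b j * C) ^+ 2.
    transitivity (\sum_j (B ^+ 2 * (c j * a j ^+ 2) - (2 * B * C) * (c j * a j * b j)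
                    + C ^+ 2 * (c j * b j ^+ 2))).
      rewrite big_split sumrB /= -!mulr_sumr -/A -/B -/C; clearbody A B C; ring.
    by apply: eq_bigr => j _; clearbody A B C; ring.
  by apply: sumr_ge0 => j _; rewrite mulr_ge0 // sqr_ge0.
have [Bz|Bp] := eqVneq B 0.
  have cb : forall j, c j * b j = 0.
    move=> j.
    have : c j * b j ^+ 2 = 0.
      move/eqP: Bz; rewrite psumr_eq0 => [/allP H|j' _]; last by rewrite mulr_ge0 // sqr_ge0.
      by apply/eqP; apply: H; rewrite mem_index_enum.
    move=> h; apply/eqP; rewrite -sqrf_eq0; apply/eqP.
    have -> : (c j * b j) ^+ 2 = c j * (c j * b j ^+ 2) by ring.
    by rewrite h mulr0.
  have -> : C = 0 by rewrite /C; apply: big1 => j _; rewrite -mulrA mulrCA cb mulr0.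
  by rewrite Bz expr0n /= mulr0.
have Bpos : 0 < B by rewrite lt_def Bp B0.
by move: key; rewrite pmulr_rge0 // subr_ge0 mulrC.
Qed.

Lemma sq_le (R : realType) (s t : R) : 0 <= t -> s ^+ 2 <= t ^+ 2 -> s <= t.
Proof.
move=> t0 H; apply: (le_trans (ler_norm s)).
by rewrite -(ler_pXn2r (_ : (0 < 2)%N)) ?nnegrE ?normr_ge0 // real_normK ?num_real.
Qed.

Definition Qf (R : realType) (n : nat) (xi x : 'cV[R]_n) : R :=
  \sum_(i < n) xi i 0 * x i 0 ^+ 2.
Arguments Qf {R n}.

Lemma Qf_ge0 (R : realType) (n : nat) (xi x : 'cV[R]_n) :
  (forall i, 0 <= xi i 0) -> 0 <= Qf xi x.
Proof. by move=> h; apply: sumr_ge0 => i _; rewrite mulr_ge0 // sqr_ge0. Qed.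

Lemma xnorm_sq (R : realType) (n : nat) (xi x : 'cV[R]_n) :
  (forall i, 0 <= xi i 0) -> xnorm xi x ^+ 2 = Qf xi x.
Proof. by move=> h; rewrite /xnorm sqr_sqrtr // Qf_ge0. Qed.

Lemma xnorm_ge0 (R : realType) (n : nat) (xi x : 'cV[R]_n) : 0 <= xnorm xi x.
Proof. exact: sqrtr_ge0. Qed.

Lemma sqrt_le_sq (R : realType) (a b : R) : 0 <= b -> a <= b ^+ 2 -> Num.sqrt a <= b.
Proof.
move=> b0 ab; apply: (le_trans (ler_wsqrtr ab)).
by rewrite sqrtr_sqr ger0_norm.
Qed.

Lemma xnorm_le (R : realType) (n : nat) (xi x : 'cV[R]_n) (b : R) :
  0 <= b -> Qf xi x <= b ^+ 2 -> xnorm xi x <= b.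
Proof. exact: sqrt_le_sq. Qed.

Lemma Qf_add (R : realType) (n : nat) (xi x y : 'cV[R]_n) :
  Qf xi (x + y) = Qf xi x + 2 * xinner xi x y + Qf xi y.
Proof.
rewrite /Qf /xinner mulr_sumr -!big_split /=; apply: eq_bigr => i _.
rewrite mxE; ring.
Qed.

Lemma Qf_opp (R : realType) (n : nat) (xi x : 'cV[R]_n) :
  Qf xi (- x) = Qf xi x.
Proof. by rewrite /Qf; apply: eq_bigr => i _; rewrite mxE sqrrN. Qed.

Lemma xnorm_opp (R : realType) (n : nat) (xi x : 'cV[R]_n) :
  xnorm xi (- x) = xnorm xi x.
Proof. by rewrite /xnorm -/(Qf xi (- x)) Qf_opp. Qed.

Lemma xnorm_subC (R : realType) (n : nat) (xi x y : 'cV[R]_n) :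
  xnorm xi (x - y) = xnorm xi (y - x).
Proof. by rewrite -xnorm_opp opprB. Qed.

Lemma xinner_cs (R : realType) (n : nat) (xi x y : 'cV[R]_n) :
  (forall i, 0 <= xi i 0) -> xinner xi x y <= xnorm xi x * xnorm xi y.
Proof.
move=> h.
have := cs_w (fun i => x i 0) (fun i => y i 0) h.
rewrite -/(Qf xi x) -/(Qf xi y) -!xnorm_sq // => H.
have := xnorm_ge0 xi x; have := xnorm_ge0 xi y.
rewrite /xinner; move: H; set s := \sum_i _; set u := xnorm xi x; set w := xnorm xi y.
move=> H u0 w0; rewrite -exprMn in H; apply: sq_le H; exact: mulr_ge0.
Qed.

Lemma xnorm_triangle (R : realType) (n : nat) (xi x y : 'cV[R]_n) :
  (forall i, 0 <= xi i 0) -> xnorm xi (x + y) <= xnorm xi x + xnorm xi y.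
Proof.
move=> h; apply: xnorm_le; first by rewrite addr_ge0 // xnorm_ge0.
rewrite Qf_add -!xnorm_sq //.
have := xinner_cs x y h; have := xnorm_ge0 xi x; have := xnorm_ge0 xi y.
set u := xnorm xi x; set w := xnorm xi y; set s := xinner _ _ _.
move=> *; nra.
Qed.

Lemma Qf_le (R : realType) (n : nat) (xi x : 'cV[R]_n) (m : 'I_n -> R) :
  (forall i, 0 <= xi i 0) -> (forall i, `|x i 0| <= m i) ->
  Qf xi x <= \sum_i xi i 0 * m i ^+ 2.
Proof.
move=> h hm; apply: ler_sum => i _; apply: ler_wpM2l => //.
rewrite -real_normK ?num_real //; apply: lerXn2r; rewrite ?nnegrE //.
exact: le_trans (hm i).
Qed.

Lemma xnorm_le_const (R : realType) (n : nat) (xi x : 'cV[R]_n) (b : R) :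
  (forall i, 0 <= xi i 0) -> \sum_i xi i 0 = 1 -> 0 <= b ->
  (forall i, `|x i 0| <= b) -> xnorm xi x <= b.
Proof.
move=> h s1 b0 hb; apply: xnorm_le => //.
apply: (le_trans (Qf_le h hb)).
by rewrite -mulr_suml s1 mul1r.
Qed.

Lemma xi_min_le (R : realType) (n : nat) (xi : 'cV[R]_n) i : xi_min xi <= xi i 0.
Proof. exact: bigmin_le. Qed.

Lemma xi_min_gt0 (R : realType) (n : nat) (xi : 'cV[R]_n) :
  (forall i, 0 < xi i 0) -> 0 < xi_min xi.
Proof.
move=> h; rewrite /xi_min; elim/big_ind: _ => //.
by move=> x y x0 y0; rewrite lt_min x0 y0.
Qed.

Lemma dot_cs (R : realType) (n : nat) (xi z u : 'cV[R]_n) :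
  (forall i, 0 < xi i 0) ->
  dotv z u <= xnorm xi z * xnorm xi u / xi_min xi.
Proof.
move=> h; have h0 : forall i, 0 <= xi i 0 by move=> i; exact: ltW.
set m := xi_min xi; have m0 : 0 < m by exact: xi_min_gt0.
apply: sq_le; first by rewrite divr_ge0 ?mulr_ge0 ?xnorm_ge0 // ltW.
have -> : dotv z u = \sum_j xi j 0 * z j 0 * (u j 0 / xi j 0).
  apply: eq_bigr => j _; have := h j; rewrite lt0r => /andP[nz _]; field.
  exact: nz.
apply: (le_trans (cs_w (fun j => z j 0) (fun j => u j 0 / xi j 0) h0)); rewrite -/(Qf xi z).
rewrite expr_div_n exprMn !xnorm_sq // -mulrA ler_wpM2l ?Qf_ge0 //.
rewrite /Qf mulr_suml; apply: ler_sum => j _.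
rewrite -mulrA ler_wpM2l // expr_div_n ler_wpM2l ?sqr_ge0 //.
rewrite lef_pV2 ?posrE ?exprn_gt0 // (ler_pXn2r (_ : (0 < 2)%N)) ?nnegrE ?(ltW m0) ?h0 //; exact: xi_min_le.
Qed.

Lemma xinner_subl (R : realType) (n : nat) (xi x y z : 'cV[R]_n) :
  xinner xi (x - y) z = xinner xi x z - xinner xi y z.
Proof.
rewrite /xinner -sumrB; apply: eq_bigr => i _; rewrite !mxE; ring.
Qed.

Lemma proj_nonexp (R : realType) (n d : nat) (xi : 'cV[R]_n) (Phi : 'M[R]_(n, d))
  (Pi : 'cV[R]_n -> 'cV[R]_n) a b :
  (forall i, 0 <= xi i 0) ->
  (forall x, is_xi_proj Phi xi x (Pi x)) ->
  xnorm xi (Pi a - Pi b) <= xnorm xi (a - b).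
Proof.
move=> h hP.
have [[tha ea] oa] := hP a; have [[thb eb] ob] := hP b.
set u := Pi a - Pi b; set e := a - b.
have eu : u = Phi *m (tha - thb) by rewrite /u ea eb mulmxBr.
have orth : xinner xi (e - u) u = 0.
  have -> : e - u = (a - Pi a) - (b - Pi b).
    by apply/matrixP => i j; rewrite /e /u !mxE; ring.
  by rewrite xinner_subl eu oa ob subr0.
have -> : e = (e - u) + u by rewrite subrK.
rewrite /xnorm ler_wsqrtr // -/(Qf xi _) -/(Qf xi _) Qf_add orth mulr0 addr0.
by rewrite lerDr Qf_ge0.
Qed.

Lemma cpt_bound (R : realType) (n : nat) (K : set 'cV[R]_n) :
  compact K -> exists M, 0 <= M /\ forall y, K y -> forall j, `|y j 0| <= M.
Proof.
move=> cK; have [M [Mr HM]] := compact_bounded cK.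
exists (`|M| + 1); split; first by rewrite addr_ge0.
move=> y Ky j.
have := HM (`|M| + 1) _ y Ky.
have lt : M < `|M| + 1 by apply: (le_lt_trans (real_ler_norm Mr)); rewrite ltrDl.
move=> /(_ lt) hy; apply: le_trans hy.
have -> : `|y| = mx_norm y by [].
rewrite mx_normrE; exact: (le_bigmax _ (fun ij : 'I_n * 'I_1 => `|y ij.1 ij.2|) (j, 0)).
Qed.

Lemma dotv_addl (R : realType) (n : nat) (x y u : 'cV[R]_n) :
  dotv (x + y) u = dotv x u + dotv y u.
Proof. by rewrite /dotv -big_split; apply: eq_bigr => i _; rewrite mxE mulrDl. Qed.

Lemma supp_ub (R : realType) (n : nat) (S : set 'cV[R]_n) u s :
  has_ubound [set dotv s u | s in S] -> S s -> dotv s u <= supp_fun S u.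
Proof.
move=> hb Ss; apply: sup_upper_bound; last by exists s.
by split => //; exists (dotv s u); exists s.
Qed.

Lemma supp_le (R : realType) (n : nat) (S : set 'cV[R]_n) u B :
  S !=set0 -> (forall s, S s -> dotv s u <= B) -> supp_fun S u <= B.
Proof.
move=> [s0 Ss0] h; apply: ge_sup; first by exists (dotv s0 u); exists s0.
by move=> r [s Ss <-]; exact: h.
Qed.

Lemma dot_bounded (R : realType) (n : nat) (p : 'cV[R]_n) (K : set 'cV[R]_n) M u :
  (forall y, K y -> forall j, `|y j 0| <= M) ->
  has_ubound [set dotv s u | s in shift_set p K].
Proof.
move=> hM; exists (\sum_j (`|p j 0| + M) * `|u j 0|).
move=> r [s [y Ky <-] <-].
apply: (le_trans (ler_norm _)); apply: (le_trans (ler_norm_sum _ _ _)).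
apply: ler_sum => j _; rewrite normrM ler_wpM2r // mxE.
by apply: (le_trans (ler_normD _ _)); rewrite lerD2l hM.
Qed.

Lemma beta_key (R : realType) (n : nat) (xi : 'cV[R]_n) (p : 'cV[R]_n)
  (U Uhat : set 'cV[R]_n) M y u G0 :
  (forall i, 0 < xi i 0) -> \sum_i xi i 0 = 1 ->
  U !=set0 -> U `<=` Uhat -> 0 <= M -> (forall y, Uhat y -> forall j, `|y j 0| <= M) ->
  Uhat y -> (forall x, U x -> dotv (p + x) u <= G0) ->
  dotv (p + y) u <= G0 + beta_ia xi U Uhat * xnorm xi u.
Proof.
move=> xp xs [x0 Ux0] sub M0 hM Uy hG.
have xi0 : forall i, 0 <= xi i 0 by move=> i; exact: ltW.
set m := xi_min xi; have m0 : 0 < m by exact: xi_min_gt0.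
set K := xnorm xi u / m.
have K0 : 0 <= K by rewrite divr_ge0 ?xnorm_ge0 // ltW.
have step : forall x, U x -> dotv (p + y) u <= G0 + K * xnorm xi (y - x).
  move=> x Ux; have -> : p + y = (p + x) + (y - x) by apply/matrixP => i j; rewrite !mxE; ring.
  rewrite dotv_addl; apply: lerD; first exact: hG.
  by rewrite /K mulrC mulrA; exact: dot_cs.
set I := inf [set xnorm xi (y - x) | x in U].
have stepI : dotv (p + y) u <= G0 + K * I.
  have [K00|Kp] := eqVneq K 0.
    by have := step x0 Ux0; rewrite K00 !mul0r.
  have Kpos : 0 < K by rewrite lt_def Kp K0.
  rewrite -lerBlDl -ler_pdivrMl //; apply: lb_le_inf.
    by exists (xnorm xi (y - x0)); exists x0.
  move=> r [x Ux <-]; rewrite ler_pdivrMl // lerBlDl; exact: step.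
set T := [set inf [set xnorm xi (y' - x) | x in U] | y' in Uhat].
have IT : I <= sup T.
  apply: sup_upper_bound; last by exists y.
  split; first by exists I; exists y.
  exists (M + M) => r [y' Uy' <-].
  apply: (le_trans (ge_inf _ _)).
  - by exists 0 => r' [x Ux <-]; exact: xnorm_ge0.
  - by exists x0.
  apply: xnorm_le_const => //; first by rewrite addr_ge0.
  move=> j; rewrite !mxE; apply: (le_trans (ler_normB _ _)).
  by apply: lerD; apply: hM => //; exact: sub.
apply: (le_trans stepI); rewrite lerD2l.
have -> : beta_ia xi U Uhat * xnorm xi u = K * sup T.
  by rewrite /beta_ia -/T -/m /K mulrAC [RHS]mulrAC (mulrC (sup T)).
exact: ler_wpM2l.
Qed.

Lemma dotv_addr (R : realType) (n : nat) (s x y : 'cV[R]_n) :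
  dotv s (x + y) = dotv s x + dotv s y.
Proof. by rewrite /dotv -big_split; apply: eq_bigr => i _; rewrite mxE mulrDr. Qed.

Lemma half_bound (R : realType) (n : nat) (S : set 'cV[R]_n) (th Mi : R) x1 x2 :
  0 < th -> S !=set0 -> has_ubound [set dotv s x2 | s in S] ->
  (forall s, S s -> th * dotv s (x1 - x2) <= Mi) ->
  th * supp_fun S x1 <= th * supp_fun S x2 + Mi.
Proof.
move=> th0 ne hb h.
rewrite -lerBlDl -mulrBr -ler_pdivlMl // lerBlDl.
apply: supp_le => // s Ss.
have -> : x1 = x2 + (x1 - x2) by rewrite addrC subrK.
rewrite dotv_addr; apply: lerD; first exact: supp_ub.
by rewrite ler_pdivlMl //; exact: h.
Qed.

Lemma jensen_row (R : realType) (n : nat) (P : 'M[R]_n) (w : 'cV[R]_n) i :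
  (forall i j, 0 <= P i j) -> (forall i, \sum_j P i j = 1) ->
  (\sum_j P i j * `|w j 0|) ^+ 2 <= \sum_j P i j * w j 0 ^+ 2.
Proof.
move=> P0 P1.
have := cs_w (fun j => `|w j 0|) (fun j => 1) (P0 i).
under eq_bigr do rewrite mulr1.
under [X in _ * X]eq_bigr do rewrite expr1n mulr1.
rewrite P1 mulr1 => h; apply: (le_trans h); apply: ler_sum => j _.
by rewrite real_normK ?num_real.
Qed.

Lemma jensen (R : realType) (n : nat) (P : 'M[R]_n) (xi w : 'cV[R]_n) :
  (forall i j, 0 <= P i j) -> (forall i, \sum_j P i j = 1) ->
  (forall i, 0 <= xi i 0) -> (forall j, \sum_i xi i 0 * P i j = xi j 0) ->
  \sum_i xi i 0 * (\sum_j P i j * `|w j 0|) ^+ 2 <= Qf xi w.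
Proof.
move=> P0 P1 xi0 st.
apply: (le_trans (y := \sum_i xi i 0 * \sum_j P i j * w j 0 ^+ 2)).
  by apply: ler_sum => i _; apply: ler_wpM2l => //; exact: jensen_row.
under eq_bigr do rewrite mulr_sumr.
rewrite exchange_big /=; apply: ler_sum => j _ /=.
by rewrite -st mulr_suml; apply: ler_sum => i _; rewrite mulrA.
Qed.

Unset Implicit Arguments.

Theorem corollary2 (R : realType) (n d : nat) (A : finType)
  (c : 'I_n -> A -> R) (theta : R) (pi : 'I_n -> A)
  (p : 'I_n -> A -> 'cV[R]_n) (U Uhat : 'I_n -> A -> set 'cV[R]_n)
  (Pexp : 'M[R]_n) (xi : 'cV[R]_n) (Phi : 'M[R]_(n, d))
  (Pi : 'cV[R]_n -> 'cV[R]_n) (alpha : R) (vt v : 'cV[R]_n) :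
  0 < theta < 1 ->
  (forall i a, simplex (p i a)) ->
  (forall i a, (U i a !=set0)%classic /\ compact (U i a)) ->
  (forall i a, shift_set (p i a) (U i a) `<=` simplex) ->
  (forall i a, U i a `<=` Uhat i a /\ compact (Uhat i a)) ->
  stochastic Pexp ->
  stationary Pexp xi ->
  (forall i, 0 < xi i 0) ->
  (forall x, is_xi_proj Phi xi x (Pi x)) ->
  0 < alpha < 1 ->
  (forall i j a q, shift_set (p i a) (U i a) q -> theta * q j 0 <= alpha * Pexp i j) ->
  alpha ^+ 2 + theta ^+ 2 * (beta_max xi pi U Uhat) ^+ 2 < 1 / 2 ->
  Pi (bellman c theta pi p Uhat vt) = vt ->
  bellman c theta pi p U v = v ->
  xnorm xi (vt - v) <=
    (theta * beta_max xi pi U Uhat * xnorm xi v + xnorm xi (Pi v - v)) /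
    (1 - Num.sqrt (2 * (alpha ^+ 2 + theta ^+ 2 * (beta_max xi pi U Uhat) ^+ 2)))
  /\
  ((forall i, beta_ia xi (U i (pi i)) (Uhat i (pi i)) = 0) ->
   xnorm xi (vt - v) <= xnorm xi (Pi v - v) / (1 - alpha)).
Proof.
move=> /andP[th0 th1] Hp HU Hsub HUh [P0 P1] [[_ xis] st] Hxi HPi /andP[al0 al1]
  Hab Hsmall Hvt Hv.
have xi0 : forall i, 0 <= xi i 0 by move=> i; exact: ltW.
set beta := beta_max xi pi U Uhat.
have beta0 : 0 <= beta by exact: bigmax_ge_id.
have beta_le : forall i, beta_ia xi (U i (pi i)) (Uhat i (pi i)) <= beta.
  by move=> i; exact: (le_bigmax _ (fun i => beta_ia xi (U i (pi i)) (Uhat i (pi i)))).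
have Mb : forall i a, exists M, 0 <= M /\ forall y, Uhat i a y -> forall j, `|y j 0| <= M.
  by move=> i a; exact: cpt_bound (HUh i a).2.
have neU : forall i a, shift_set (p i a) (U i a) !=set0.
  by move=> i a; have [x Ux] := (HU i a).1; exists (p i a + x); exists x.
have neUh : forall i a, shift_set (p i a) (Uhat i a) !=set0.
  by move=> i a; have [x Ux] := (HU i a).1; exists (p i a + x); exists x => //; exact: (HUh i a).1.
have bdUh : forall i a u, has_ubound [set dotv s u | s in shift_set (p i a) (Uhat i a)].
  by move=> i a u; have [M [_ HM]] := Mb i a; exact: dot_bounded HM.
have bdU : forall i a u, has_ubound [set dotv s u | s in shift_set (p i a) (U i a)].
  move=> i a u; have [M [_ HM]] := Mb i a.
  have HM' : forall y, U i a y -> forall j, `|y j 0| <= M.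
    by move=> y Uy; apply: HM; exact: (HUh i a).1.
  exact: dot_bounded HM'.
have key : forall i z s, shift_set (p i (pi i)) (Uhat i (pi i)) s ->
    theta * dotv s z <= alpha * (\sum_j Pexp i j * `|z j 0|) + theta * beta * xnorm xi z.
  move=> i z s [y Uy <-]; set a := pi i.
  have [M [M0 HM]] := Mb i a.
  have h : dotv (p i a + y) z <= alpha * (\sum_j Pexp i j * `|z j 0|) / theta +
       beta_ia xi (U i a) (Uhat i a) * xnorm xi z.
    apply: (beta_key Hxi xis (HU i a).1 (HUh i a).1 M0 HM Uy).
    move=> x Ux; rewrite ler_pdivlMr // mulrC /dotv mulr_sumr mulr_sumr.
    apply: ler_sum => j _.
    have hs : shift_set (p i a) (U i a) (p i a + x) by exists x.
    have q0 : 0 <= (p i a + x) j 0 := ((Hsub i a _ hs).1 j).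
    have := Hab i j a _ hs.
    move=> h; apply: (le_trans (y := theta * ((p i a + x) j 0 * `|z j 0|))).
      apply: ler_wpM2l; first exact: ltW.
      by apply: ler_wpM2l => //; exact: ler_norm.
    by rewrite !mulrA; apply: ler_wpM2r.
  apply: (le_trans (y := theta * (alpha * (\sum_j Pexp i j * `|z j 0|) / theta +
       beta_ia xi (U i a) (Uhat i a) * xnorm xi z))).
    by rewrite ler_wpM2l // ltW.
  rewrite mulrDr mulrCA mulfV ?gt_eqF // mulr1 lerD2l -mulrA ler_wpM2l ?(ltW th0) //.
  by apply: ler_wpM2r; [exact: xnorm_ge0 | exact: beta_le].
set w := vt - v.
set aw := fun i => \sum_j Pexp i j * `|w j 0|.
set D := bellman c theta pi p Uhat vt - bellman c theta pi p Uhat v.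
have Dbound : forall i, `|D i 0| <= alpha * aw i + theta * beta * xnorm xi w.
  move=> i; rewrite /D !mxE.
  set s1 := supp_fun _ vt; set s2 := supp_fun _ v.
  have h1 : theta * s1 <= theta * s2 + (alpha * aw i + theta * beta * xnorm xi w).
    apply: half_bound; [exact: th0 | exact: neUh | exact: bdUh | ].
    by move=> s Ss; exact: key.
  have h2 : theta * s2 <= theta * s1 + (alpha * aw i + theta * beta * xnorm xi w).
    apply: half_bound; [exact: th0 | exact: neUh | exact: bdUh | ].
    move=> s Ss; have := key i (v - vt) s Ss.
    rewrite xnorm_subC -/w.
    have -> : \sum_j Pexp i j * `|(v - vt) j 0| = aw i.
      by apply: eq_bigr => j _; rewrite /w !mxE distrC.
    by [].
  rewrite ler_norml; apply/andP; split; lra.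
have Ebound : forall i, `|(bellman c theta pi p Uhat v - bellman c theta pi p U v) i 0|
    <= theta * beta * xnorm xi v.
  move=> i; rewrite !mxE; set a := pi i.
  set s1 := supp_fun (shift_set (p i a) (Uhat i a)) v.
  set s2 := supp_fun (shift_set (p i a) (U i a)) v.
  have [M [M0 HM]] := Mb i a.
  have h1 : s1 <= s2 + beta_ia xi (U i a) (Uhat i a) * xnorm xi v.
    apply: supp_le => // s [y Uy <-].
    apply: (beta_key Hxi xis (HU i a).1 (HUh i a).1 M0 HM Uy).
    move=> x Ux; apply: supp_ub; first exact: bdU.
    by exists x.
  have h2 : s2 <= s1.
    apply: supp_le => // s [x Ux <-]; apply: supp_ub; first exact: bdUh.
    by exists x => //; exact: (HUh i a).1.
  have h3 : beta_ia xi (U i a) (Uhat i a) * xnorm xi v <= beta * xnorm xi v.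
    by apply: ler_wpM2r; [exact: xnorm_ge0 | exact: beta_le].
  have h4 : 0 <= theta * (s1 - s2) <= theta * (beta * xnorm xi v).
    apply/andP; split; first by rewrite mulr_ge0 ?subr_ge0 // ltW.
    by apply: ler_wpM2l; [exact: ltW | lra].
  rewrite (_ : c i a + theta * s1 - (c i a + theta * s2) = theta * (s1 - s2)); last by ring.
  rewrite ger0_norm; last by case/andP: h4.
  by rewrite -mulrA; case/andP: h4.
set E := bellman c theta pi p Uhat v - bellman c theta pi p U v.
have NE : xnorm xi E <= theta * beta * xnorm xi v.
  apply: (xnorm_le_const xi0 xis _ Ebound).
  by rewrite !mulr_ge0 ?xnorm_ge0 // ltW.
have QD : Qf xi D <= \sum_i xi i 0 * (alpha * aw i + theta * beta * xnorm xi w) ^+ 2.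
  exact: Qf_le.
have J : \sum_i xi i 0 * aw i ^+ 2 <= Qf xi w by exact: jensen.
have Nw2 : xnorm xi w ^+ 2 = Qf xi w by exact: xnorm_sq.
set A1 := Pi (bellman c theta pi p Uhat vt) - Pi (bellman c theta pi p Uhat v).
set A2 := Pi (bellman c theta pi p Uhat v) - Pi (bellman c theta pi p U v).
set A3 := Pi v - v.
have dec : w = A1 + (A2 + A3).
  rewrite /A1 /A2 /A3 Hv /w -[in LHS]Hvt.
  by apply/matrixP => i j; rewrite !mxE; ring.
have N1 : xnorm xi A1 <= xnorm xi D by exact: proj_nonexp.
have N2 : xnorm xi A2 <= xnorm xi E by exact: proj_nonexp.
have Ntri : xnorm xi w <= xnorm xi A1 + xnorm xi A2 + xnorm xi A3.
  rewrite {1}dec; apply: (le_trans (xnorm_triangle _ _ xi0)).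
  by rewrite -(addrA (xnorm xi A1)) lerD2l; exact: xnorm_triangle.
split.
  set k := Num.sqrt (2 * (alpha ^+ 2 + theta ^+ 2 * beta ^+ 2)).
  have k0 : 0 <= 2 * (alpha ^+ 2 + theta ^+ 2 * beta ^+ 2).
    by apply: mulr_ge0 => //; apply: addr_ge0; [exact: sqr_ge0 | apply: mulr_ge0; exact: sqr_ge0].
  have k1 : k < 1.
    apply: (@lt_le_trans _ _ (Num.sqrt 1)); last by rewrite sqrtr1.
    rewrite /k ltr_sqrt //; move: Hsmall; rewrite -/beta; lra.
  have kk : k ^+ 2 = 2 * (alpha ^+ 2 + theta ^+ 2 * beta ^+ 2) by rewrite sqr_sqrtr.
  have ND : xnorm xi D <= k * xnorm xi w.
    apply: xnorm_le; first by rewrite mulr_ge0 ?sqrtr_ge0 ?xnorm_ge0.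
    apply: (le_trans QD).
    apply: (le_trans (y := \sum_i (2 * alpha ^+ 2 * (xi i 0 * aw i ^+ 2) +
               2 * (theta * beta * xnorm xi w) ^+ 2 * xi i 0))).
      apply: ler_sum => i _.
      have := xi0 i; set x := xi i 0; set y := alpha * aw i;
        set t := theta * beta * xnorm xi w => x0.
      have -> : 2 * alpha ^+ 2 * (x * aw i ^+ 2) = 2 * x * y ^+ 2 by rewrite /y; ring.
      have := mulr_ge0 x0 (sqr_ge0 (y - t)); clearbody x y t; nra.
    rewrite big_split /= -!mulr_sumr xis mulr1.
    rewrite !exprMn kk Nw2.
    have h := ler_wpM2l (sqr_ge0 alpha) J.
    move: h; set S := \sum_i _; set Q := Qf xi w => h.
    clearbody S Q; nra.
  have Nmain : xnorm xi w <= k * xnorm xi w + theta * beta * xnorm xi v + xnorm xi A3.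
    lra.
  rewrite ler_pdivlMr ?subr_gt0 //.
  have := xnorm_ge0 xi w; nra.
move=> hz.
have b0 : beta = 0.
  rewrite /beta /beta_max; apply: (big_ind (fun x => x = 0)) => //.
  by move=> x y -> ->; rewrite maxxx.
have ND : xnorm xi D <= alpha * xnorm xi w.
  apply: xnorm_le; first by rewrite mulr_ge0 ?xnorm_ge0 // ltW.
  apply: (le_trans QD); rewrite b0 exprMn Nw2.
  under eq_bigr do rewrite mulr0 mul0r addr0 exprMn mulrCA.
  by rewrite -mulr_sumr; apply: ler_wpM2l; [exact: sqr_ge0 | exact: J].
have Nmain : xnorm xi w <= alpha * xnorm xi w + xnorm xi A3.
  move: NE; rewrite b0 mulr0 mul0r => NE; lra.
rewrite ler_pdivlMr ?subr_gt0 //.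
have := xnorm_ge0 xi w; nra.
Qed.
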